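(* Every finite abelian group is completely $D$-realisable.
   Context: All groups are finite. $D(H)=H'$ denotes the derived subgroup of $H$. A finite group $G$ is completely $D$-realisable if there is a finite group $H$ such that: (i) $G\cong D(H)$; (ii) for every subgroup $G_1\leq G$ there exists $H_1\leq H$ with $G_1\cong D(H_1)$; (iii) for every $H_1\leq H$ there exists $G_1\leq G$ with $D(H_1)\cong G_1$. *)

(* Defs.v *)
From mathcomp Require Import all_boot all_fingroup all_solvable.
Set Implicit Arguments. Unset Strict Implicit. Unset Printing Implicit Defensive.
Local Open Scope group_scope.

(* D(H) = H' = [~: H, H] (derived subgroup, H^`(1) in MathComp). *)
Definition completely_D_realisable (gT : finGroupType) (G : {group gT}) : Prop :=
  exists (hT : finGroupType) (H : {group hT}),
    [/\ G \isog H^`(1),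
        (forall G1 : {group gT}, G1 \subset G ->
           exists2 H1 : {group hT}, H1 \subset H & G1 \isog H1^`(1))
      & (forall H1 : {group hT}, H1 \subset H ->
           exists2 G1 : {group gT}, G1 \subset G & H1^`(1) \isog G1)].

(* Main.v *)
Require Import Defs.
Set Warnings "-redundant-canonical-projection -notation-overridden -notation-incompatible-prefix".
From HB Require Import structures.
From mathcomp Require Import all_boot all_fingroup all_solvable.
Set Implicit Arguments. Unset Strict Implicit. Unset Printing Implicit Defensive.
Local Open Scope group_scope.

Section Wr.
Variable gT : finGroupType.
Definition wr : Type := (gT * gT * bool)%type.
HB.instance Definition _ := Finite.on wr.
Definition wmul (x y : wr) : wr :=
  let: (a, b, s) := x in let: (c, d, s') := y in
  if s then (a * d, b * c, ~~ s') else (a * c, b * d, s').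
Definition winv (x : wr) : wr :=
  let: (a, b, s) := x in if s then (b^-1, a^-1, true) else (a^-1, b^-1, false).
Definition wone : wr := (1, 1, false).
Lemma wmulA : associative wmul.
Proof. by move=> [[a b] []] [[c d] []] [[e f] []]; rewrite /= !mulgA. Qed.
Lemma wmul1 : left_id wone wmul.
Proof. by move=> [[a b] []]; rewrite /= !mul1g. Qed.
Lemma wmulV : left_inverse wone winv wmul.
Proof. by move=> [[a b] []]; rewrite /= !mulVg. Qed.
HB.instance Definition _ := Finite_isGroup.Build wr wmulA wmul1 wmulV.
End Wr.
Section W2.
Variable gT : finGroupType.
Lemma wmulE (x y : wr gT) : x * y = wmul x y. Proof. by []. Qed.
Lemma winvE (x : wr gT) : x^-1 = winv x. Proof. by []. Qed.
Lemma woneE : (1 : wr gT) = (1, 1, false). Proof. by []. Qed.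

Definition Hset (G1 : {set gT}) := [set x : wr gT | (x.1.1 \in G1) && (x.1.2 \in G1)].
Lemma Hset_group (G1 : {group gT}) : group_set (Hset G1).
Proof.
apply/group_setP; split; first by rewrite inE woneE /= group1.
move=> [[a b] s] [[c d] s']; rewrite !inE /= => /andP[Ha Hb] /andP[Hc Hd].
by rewrite wmulE; case: s => /=; rewrite !groupM.
Qed.
Canonical HG (G1 : {group gT}) := Group (Hset_group G1).

Lemma HGS (G1 G2 : {group gT}) : G1 \subset G2 -> HG G1 \subset HG G2.
Proof.
move/subsetP=> s12; apply/subsetP=> x; rewrite !inE => /andP[a b].
by rewrite !s12.
Qed.

Definition fw (u : gT) : wr gT := (u^-1, u, false).
Definition piw (x : wr gT) : gT := x.1.1 * x.1.2.

Section Ab.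
Variable G1 : {group gT}.
Hypothesis abG1 : abelian G1.

Lemma fw_morph : {in G1 &, {morph fw : x y / x * y}}.
Proof.
move=> u v Hu Hv; rewrite /fw wmulE /=.
by rewrite -[u^-1 * _]invMg (centsP abG1 v Hv u Hu).
Qed.
Canonical fwm := Morphism fw_morph.

Lemma piw_morph : {in HG G1 &, {morph piw : x y / x * y}}.
Proof.
move=> x y; rewrite !inE; case: x => [[a b] s]; case: y => [[c d] s'] /= /andP[Ha Hb] /andP[Hc Hd].
rewrite wmulE /piw; case: s => /=.
  rewrite !mulgA -(mulgA a d b) (centsP abG1 d Hd b Hb) !mulgA.
  by rewrite -(mulgA _ d c) (centsP abG1 d Hd c Hc) !mulgA.
by rewrite !mulgA -(mulgA a c b) (centsP abG1 c Hc b Hb) !mulgA.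
Qed.
Canonical piwm := Morphism piw_morph.

Lemma der_HG : (HG G1)^`(1) = fwm @* G1.
Proof.
apply/eqP; rewrite eqEsubset; apply/andP; split.
  rewrite derg1 gen_subG; apply/subsetP=> z /imset2P[x y Hx Hy ->].
  have Hz : [~ x, y] \in HG G1 by rewrite groupR.
  have Hp : piw [~ x, y] = 1.
    rewrite (morphR piwm Hx Hy); apply/eqP/commgP.
    move: Hx Hy; rewrite !inE => /andP[Ha Hb] /andP[Hc Hd].
    by apply: (centsP abG1); rewrite groupM.
  have Hs : [~ x, y].2 = false.
    move: x y {Hx Hy Hz Hp} => [[a b] s] [[c d] s'].
    by case: s; case: s'.
  suff: [~ x, y] \in fw @: G1 by rewrite -morphimEdom.
   apply/imsetP; exists [~ x, y].1.2.
    by move: Hz; rewrite inE => /andP[].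
  move: Hp Hs; rewrite /piw /fw; case: [~ x, y] => [[p q] r] /= Hp ->.
  by move/eqP: Hp; rewrite -eq_invg_mul => /eqP <-; rewrite invgK.
rewrite morphimEdom; apply/subsetP=> z /imsetP[u Hu ->].
change (fw u \in (HG G1)^`(1)).
have -> : fw u = [~ ((u, 1, false) : wr gT), (1, 1, true)].
  by rewrite /fw /commg /conjg !wmulE !winvE /= !invg1 !mulg1 !mul1g.
by rewrite derg1 mem_commg // inE /= ?Hu group1.
Qed.

Lemma isog_HG : G1 \isog (HG G1)^`(1).
Proof.
rewrite der_HG; apply: sub_isog => //; apply/injmP=> u v _ _ [].
by [].
Qed.
End Ab.
End W2.

Theorem theorem3p1 (gT : finGroupType) (G : {group gT}) :
  abelian G -> completely_D_realisable G.
Proof.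
move=> abG; exists (wr gT), (HG G); split.
- exact: isog_HG.
- move=> G1 sG1; exists (HG G1); first exact: HGS.
  exact: isog_HG (abelianS sG1 abG).
- move=> H1 sH1.
  have sD : H1^`(1) \subset fwm abG @* G by rewrite -der_HG dergS.
  exists (fwm abG @*^-1 H1^`(1))%G; first exact: morphpre_sub.
  have inj : 'injm (fwm abG) by apply/injmP=> u v _ _ [].
  have := sub_isog (morphpre_sub (fwm abG) H1^`(1)) inj.
  by rewrite morphpreK // isog_sym.
Qed.
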